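(* (Failure of logical omniscience.) There exist a Hintikka tree $H$ and sentences $\varphi_1, \varphi_2$ of $L$ that are logically equivalent but satisfy $B(\varphi_1) \neq B(\varphi_2)$, where $B$ is the belief induced by $H$.
   Context: $L$ is a first-order language without equality with finitely many predicate symbols and no function or constant symbols. For $d \in \mathbb{N}$, $\Delta^{(d)}$ is the finite set of Hintikka constituents of depth $d$ with no free variables ($\Delta^{(0)} = \{\top\}$); every sentence $\varphi$ of quantifier depth $d$ is logically equivalent to the disjunction of a set $\mathrm{dnf}(\varphi) \subseteq \Delta^{(d)}$ (its Hintikka distributive normal form of depth $d$). $\mathrm{expand}(1,\delta^{(d)})\subseteq\Delta^{(d+1)}$ denotes the expansions of $\delta^{(d)}$. Refinement tree: on $\Delta = \bigcup_d \Delta^{(d)}$ put an edge from each $\delta^{(d)}$ to each member of $\mathrm{expand}(1,\delta^{(d)})$, keeping a constituent lying in several depth-$d$ expansions as child of only one of them. A Hintikka tree is a function $H: \Delta \to [0,1]$ with $H(\delta^{(0)}) = 1$ and $H(\delta) = \sum_{\delta' \text{ child of } \delta} H(\delta')$ for all $\delta$. Let $\Psi^\omega$ be the set of infinite root paths in the refinement tree with the topology generated by cylinders $[\delta^{(0)}\cdots\delta^{(d)}]$ (paths with that prefix), and $\beta$ the unique Borel probability measure with $\beta([\delta^{(0)}\cdots\delta^{(d)}]) = H(\delta^{(d)})$. The belief in a sentence $\varphi$ of depth $d$ is $B(\varphi) = \sum_{\delta^{(d)} \in \mathrm{dnf}(\varphi)} \beta([\delta^{(0)} \cdots \delta^{(d)}])$,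 where $\delta^{(0)}\cdots\delta^{(d)}$ is the root path to $\delta^{(d)}$. *)

(* Defs.v *)
From HB Require Import structures.
From mathcomp Require Import all_boot all_order all_algebra.
From mathcomp Require Import boolp reals.
Set Implicit Arguments. Unset Strict Implicit. Unset Printing Implicit Defensive.
Import Order.TTheory GRing.Theory Num.Theory.

(* The language L: a finite type P of predicate symbols with arities ar.
   No equality, no function or constant symbols. *)
Section FOL.
Variables (P : finType) (ar : P -> nat).

Inductive fol : Type :=
| FTrue
| FFalse
| FAtom (p : P) (args : (ar p).-tuple nat)
| FNot (f : fol)
| FAnd (f g : fol)
| FOr (f g : fol)
| FImp (f g : fol)
| FEx (x : nat) (f : fol)
| FAll (x : nat) (f : fol).

Fixpoint qdepth (f : fol) : nat :=
  match f with
  | FNot g => qdepth g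
  | FAnd g h | FOr g h | FImp g h => maxn (qdepth g) (qdepth h)
  | FEx _ g | FAll _ g => (qdepth g).+1
  | _ => 0
  end.

Fixpoint fv (f : fol) : seq nat :=
  match f with
  | FAtom _ t => tval t
  | FNot g => fv g
  | FAnd g h | FOr g h | FImp g h => fv g ++ fv h
  | FEx x g | FAll x g => filter (predC1 x) (fv g)
  | _ => [::]
  end.

Definition sentence (f : fol) : Prop := fv f = [::].

Record structure := MkStructure {
  dom :> Type;
  dom_inhabited : inhabited dom;
  interp : forall p : P, (ar p).-tuple dom -> Prop }.

Definition upd (M : Type) (v : nat -> M) (x : nat) (a : M) : nat -> M :=
  fun y => if y == x then a else v y.

Fixpoint sat (M : structure) (v : nat -> M) (f : fol) : Prop :=
  match f with
  | FTrue => True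
  | FFalse => False
  | FAtom p t => @interp M p (map_tuple v t)
  | FNot g => ~ @sat M v g
  | FAnd g h => @sat M v g /\ @sat M v h
  | FOr g h => @sat M v g \/ @sat M v h
  | FImp g h => @sat M v g -> @sat M v h
  | FEx x g => exists a : M, @sat M (upd v x a) g
  | FAll x g => forall a : M, @sat M (upd v x a) g
  end.

Definition lequiv (f g : fol) : Prop :=
  forall (M : structure) (v : nat -> M), @sat M v f <-> @sat M v g.
Definition entails (f g : fol) : Prop :=
  forall (M : structure) (v : nat -> M), @sat M v f -> @sat M v g.
Definition satisfiable (f : fol) : Prop :=
  exists (M : structure) (v : nat -> M), @sat M v f.

(** A constituent of depth d in the free variables
    x_0,...,x_{k-1} consists of a sign assignment to the atomic formulas in
    x_0..x_{k-1} that contain the last variable x_{k-1}, together with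
    (for d > 0) the set of depth-(d-1) constituents in x_0..x_k that are
    asserted to exist (and to exhaust the possibilities) for x_k. *)
Definition atom (k : nat) : finType := {p : P & (ar p).-tuple 'I_k}.
Definition mentions_last k (a : atom k) : bool :=
  (k.-1 \in map (@nat_of_ord k) (tval (tagged a))) && (0 < k).
Definition atomK (k : nat) : finType := {a : atom k | mentions_last a}.

Fixpoint ctype (d k : nat) : finType :=
  match d with
  | 0 => {ffun atomK k -> bool}
  | d'.+1 => ({ffun atomK k -> bool} * {set ctype d' k.+1})%type
  end.

Definition atom_form k (a : atomK k) : fol :=
  FAtom (map_tuple (@nat_of_ord k) (tagged (val a))).

Definition bigAnd (s : seq fol) : fol := foldr FAnd FTrue s.
Definition bigOr (s : seq fol) : fol := foldr FOr FFalse s.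

Definition signs_form k (A : {ffun atomK k -> bool}) : fol :=
  bigAnd [seq (if A a then atom_form a else FNot (atom_form a)) | a <- enum (atomK k)].

Fixpoint cform (d k : nat) {struct d} : ctype d k -> fol :=
  match d return ctype d k -> fol with
  | 0 => fun A => signs_form A
  | d'.+1 => fun c =>
      FAnd (signs_form c.1)
        (FAnd (bigAnd [seq FEx k (cform s) | s <- enum c.2])
              (FAll k (bigOr [seq cform s | s <- enum c.2])))
  end.

(** Reduction: omit the deepest layer of quantifiers.  The expansion
    expand(1, c) of a depth-d constituent c is the set of depth-(d+1)
    constituents reducing to c; this is the refinement tree (each node has a
    unique parent). *)
Fixpoint red (d k : nat) {struct d} : ctype d.+1 k -> ctype d k :=
  match d return ctype d.+1 k -> ctype d k with
  | 0 => fun c => c.1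
  | d'.+1 => fun c => (c.1, [set red s | s in c.2])
  end.

Definition Delta (d : nat) : finType := ctype d 0.

Definition expand1 (d : nat) (c : Delta d) : {set Delta d.+1} :=
  [set c' : Delta d.+1 | red c' == c].

Local Open Scope ring_scope.
Definition hintikka_tree (R : realType) (H : forall d, Delta d -> R) : Prop :=
  [/\ forall c : Delta 0, H 0 c = 1,
      forall d (c : Delta d), 0 <= H d c <= 1
    & forall d (c : Delta d), H d c = \sum_(c' in expand1 c) H d.+1 c'].

Definition dnf (f : fol) : {set Delta (qdepth f)} :=
  [set c : Delta (qdepth f) | `[< satisfiable (cform c) /\ entails (cform c) f >] ].

(** Belief: B(f) = sum over dnf(f) of beta([root path to c]) = H(c). *)
Definition belief (R : realType) (H : forall d, Delta d -> R) (f : fol) : R :=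
  \sum_(c in dnf f) H (qdepth f) c.

End FOL.

(* Main.v *)
Require Import Defs.
From HB Require Import structures.
From mathcomp Require Import all_boot all_order all_algebra.
From mathcomp Require Import boolp reals.
Import Order.TTheory GRing.Theory Num.Theory.
Local Open Scope ring_scope.

Section Aux.
Variables (P : finType) (ar : P -> nat).

Lemma atomK0_empty (a : atomK ar 0) : False.
Proof. by case: a => x; rewrite /mentions_last andbF. Qed.

Lemma enum_atomK0 : enum (atomK ar 0) = [::].
Proof.
case E: (enum (atomK ar 0)) => [|a s] //.
by exfalso; apply: (atomK0_empty a).
Qed.

Definition eC (d : nat) : Delta ar d :=
  match d return ctype ar d 0 with
  | 0 => [ffun _ => false]
  | d'.+1 => ([ffun _ => false], set0)
  end.

Lemma ffun0_eq (f g : {ffun atomK ar 0 -> bool}) : f = g.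
Proof. by apply/ffunP => a; exfalso; apply: atomK0_empty a. Qed.

Lemma Delta0_eq (c : Delta ar 0) : c = eC 0.
Proof. exact: ffun0_eq. Qed.

Lemma red_eC d : red (eC d.+1) = eC d.
Proof.
case: d => [|d] //=.
by rewrite imset0.
Qed.

Definition Hf (R : realType) (d : nat) (c : Delta ar d) : R := (c == eC d)%:R.

Lemma Hf_tree (R : realType) : hintikka_tree (@Hf R).
Proof.
split.
- by move=> c; rewrite /Hf (Delta0_eq c) eqxx.
- by move=> d c; rewrite /Hf; case: (c == eC d); rewrite ?lexx ?ler01 /=.
- move=> d c; rewrite /Hf.
  case: (boolP (eC d.+1 \in expand1 c)) => h.
  + rewrite (bigD1 _ h) /= eqxx big1 ?addr0.
    * move: h; rewrite inE red_eC => /eqP ->; by rewrite eqxx.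
    * by move=> c' /andP[_ /negbTE ->].
  + rewrite big1.
    * case: eqP => // ec; move: h; by rewrite inE red_eC ec eqxx.
    * move=> c' hc'; case: eqP => // ec; move: hc'; by rewrite ec (negbTE h).
Qed.

Definition unitS : structure ar :=
  @MkStructure P ar unit (inhabits tt) (fun _ _ => True).

End Aux.

Theorem mainTheorem5 (P : finType) (ar : P -> nat) (har : forall p, (0 < ar p)%N)
  (R : realType) :
  exists (H : forall d, Delta ar d -> R) (phi1 phi2 : fol ar),
    [/\ hintikka_tree H, sentence phi1, sentence phi2, lequiv phi1 phi2
      & belief H phi1 != belief H phi2].
Proof.
exists (@Hf P ar R), (@FTrue P ar), (FAll 0 (@FTrue P ar)).
split.
- exact: Hf_tree.
- by [].
- by [].
- by move=> M v /=; split.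
- have e0in : @eC P ar 0 \in dnf (@FTrue P ar).
    rewrite inE; apply/asboolP; split.
    + exists (@unitS P ar), (fun _ => tt).
      by rewrite /= /signs_form enum_atomK0.
    + by [].
  have b1 : belief (@Hf P ar R) (@FTrue P ar) = 1.
    rewrite /belief /= (bigD1 _ e0in) /= /Hf eqxx big1 ?addr0 //.
    by move=> c /andP[_ ne]; move: ne; rewrite (@Delta0_eq P ar c) eqxx.
  have b2 : belief (@Hf P ar R) (FAll 0 (@FTrue P ar)) = 0.
    rewrite /belief /= big1 // => c hc; rewrite /Hf.
    case: eqP => // ec; exfalso; move: hc; rewrite ec inE => /asboolP[[M [v]]].
    move=> /= [_ [_ hall]] _.
    case: (dom_inhabited M) => a; move: (hall a).
    by rewrite enum_set0.
  by rewrite b1 b2 oner_neq0.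
Qed.
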